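(* If $A_1,\ldots,A_n$ are sequentially distorted subsets of a group $G$, then $A:=A_1A_2\cdots A_n=\{a_1a_2\cdots a_n: a_i\in A_i\}$ is sequentially distorted in $G$. Moreover, if each $A_j$ is strongly distorted, then $A$ is strongly distorted.
   Context: For $S\subset G$ and $k\in\mathbb N$, $S^k=\{s_1\cdots s_k: s_i\in S\}$. A subset $A$ of $G$ is sequentially distorted if there is a sequence $(w_n)\subset\mathbb N$ such that for every sequence $(a_n)\subset A$ there is a finite $S\subset G$ with $a_n\in S^{w_n}$ for all $n$. It is strongly distorted if there are $m\in\mathbb N$ and $(w_n)\subset\mathbb N$ such that for every sequence $(a_n)\subset A$ there is $S\subset G$ of cardinality $m$ with $a_n\in S^{w_n}$ for all $n$. *)

(* Defs.v *)
From mathcomp Require Import all_boot.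
Set Implicit Arguments. Unset Strict Implicit. Unset Printing Implicit Defensive.

Section Distortion.
Variable G : groupType.

Definition in_pow (S : seq G) (k : nat) (x : G) : Prop :=
  exists s : 'I_k -> G, (forall i, s i \in S) /\ x = \big[mul/one]_(i < k) s i.

Definition seq_distorted (A : G -> Prop) : Prop :=
  exists w : nat -> nat, (forall n, 0 < w n) /\
    forall a : nat -> G, (forall n, A (a n)) ->
      exists S : seq G, forall n, in_pow S (w n) (a n).

Definition strongly_distorted (A : G -> Prop) : Prop :=
  exists (m : nat) (w : nat -> nat), (forall n, 0 < w n) /\
    forall a : nat -> G, (forall n, A (a n)) ->
      exists S : seq G, uniq S /\ size S = m /\
        forall n, in_pow S (w n) (a n).

Definition prod_set (n : nat) (A : 'I_n -> G -> Prop) (x : G) : Prop :=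
  exists a : 'I_n -> G, (forall i, A i (a i)) /\ x = \big[mul/one]_(i < n) a i.

End Distortion.

(* Main.v *)
Require Import Defs.
From mathcomp Require Import all_boot.
From Stdlib Require Import Classical ClassicalEpsilon.
From mathcomp Require Import zify.

Section Aux.
Variable G : groupType.

Lemma in_pow0 (S : seq G) : in_pow S 0 one.
Proof. exists (fun i : 'I_0 => match i with Ordinal _ H => False_rect _ (notF H) end).
split; first by case. by rewrite big_ord0. Qed.

Lemma in_pow_mul (S : seq G) k l x y :
  in_pow S k x -> in_pow S l y -> in_pow S (k + l) (mul x y).
Proof.
move=> [s1 [H1 ->]] [s2 [H2 ->]].
exists (fun i => match split i with inl j => s1 j | inr j => s2 j end); split.
  by move=> i; case: (split i).
rewrite big_split_ord /=; congr mul; apply: eq_bigr => i _.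
  by rewrite (unsplitK (inl _ i)).
by rewrite (unsplitK (inr _ i)).
Qed.

Lemma in_pow_sub (S T : seq G) k x :
  {subset S <= T} -> in_pow S k x -> in_pow T k x.
Proof. by move=> sub [s [Hs ->]]; exists s; split => // i; apply: sub. Qed.

Lemma in_pow_big n (S : seq G) (w : 'I_n -> nat) (f : 'I_n -> G) :
  (forall i, in_pow S (w i) (f i)) ->
  in_pow S (\sum_(i < n) w i) (\big[mul/one]_(i < n) f i).
Proof.
elim: n w f => [|n IH] w f H.
  by rewrite !big_ord0; apply: in_pow0.
rewrite big_ord_recr [X in in_pow _ _ X]big_ord_recr /=.
apply: in_pow_mul; last exact: H.
by apply: IH => i; apply: H.
Qed.

Lemma pad (U T : seq G) m :
  uniq U -> size U <= m -> uniq T -> size T = m ->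
  exists V, uniq V /\ size V = m /\ {subset U <= V}.
Proof.
move=> uU sU uT sT.
set F := [seq t <- T | t \notin U].
have sF : m <= size U + size F.
  have c1 : count (mem U) T <= size U.
    rewrite -size_filter; apply: uniq_leq_size; first exact: filter_uniq.
    by move=> x; rewrite mem_filter => /andP[].
  have E := count_predC (mem U) T.
  have -> : size F = count (predC (mem U)) T by rewrite size_filter.
  rewrite -sT -E; apply: leq_add =>//.
exists (take m (U ++ F)); split; [|split].
- apply: take_uniq; rewrite cat_uniq uU filter_uniq //= andbT.
  apply/hasPn => x; rewrite mem_filter => /andP[] //.
- by rewrite size_takel // size_cat.
- move=> x xU; rewrite take_cat ltnNge sU /= mem_cat xU //.
Qed.

Lemma maxuniq N : exists m, m <= N /\ (exists T : seq G, uniq T /\ size T = m) /\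
  forall U : seq G, uniq U -> size U <= N -> size U <= m.
Proof.
elim: N => [|N [m [mN [ex mx]]]].
  by exists 0; split => //; split; [exists [::] | ].
case: (classic (exists T : seq G, uniq T /\ size T = N.+1)) => [e|ne].
  by exists N.+1; split.
exists m; split; first by apply: leqW.
split => // U uU sU.
case: (ltngtP (size U) N.+1) => h.
- by apply: mx.
- by rewrite ltnNge sU in h.
- by case: ne; exists U.
Qed.

End Aux.

Lemma choice_fun (I T : Type) (P : I -> T -> Prop) :
  (forall i, exists x, P i x) -> exists f : I -> T, forall i, P i (f i).
Proof.
move=> H; exists (fun i => proj1_sig (constructive_indefinite_description _ (H i))).
by move=> i; case: constructive_indefinite_description.
Qed.

Arguments choice_fun {I T P}.

Theorem lemma3p4 (G : groupType) (n : nat) (A : 'I_n -> G -> Prop) :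
  0 < n ->
  ((forall i, seq_distorted (A i)) -> seq_distorted (prod_set A)) /\
  ((forall i, strongly_distorted (A i)) -> strongly_distorted (prod_set A)).
Proof.
move=> n0.
have wpos : forall w : 'I_n -> nat -> nat, (forall i k, 0 < w i k) ->
    forall k, 0 < \sum_(i < n) w i k.
  move=> w wp k; case: n n0 A w wp => // n' _ _ w wp.
  by rewrite big_ord_recl addn_gt0 wp.
split.
- move=> H; have [w Hw] := choice_fun H.
  exists (fun k => \sum_(i < n) w i k); split.
    by apply: wpos => i; case: (Hw i).
  move=> x Hx; have [a Ha] := choice_fun Hx.
  have HS : forall i, exists S : seq G, forall k, in_pow S (w i k) (a k i).
    by move=> i; case: (Hw i) => _ /(_ (fun k => a k i)); apply => k; case: (Ha k).
  have [S HS'] := choice_fun HS.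
  exists (flatten [seq S i | i <- enum 'I_n]) => k.
  case: (Ha k) => _ ->; apply: in_pow_big => i.
  apply: in_pow_sub (HS' i k) => y yS.
  by apply/flatten_mapP; exists i => //; rewrite mem_enum.
- move=> H; have [m Hm] := choice_fun H.
  have [w Hw] := choice_fun Hm.
  pose N := \sum_(i < n) m i.
  have [M [_ [[T [uT sT]] mx]]] := maxuniq G N.
  exists M, (fun k => \sum_(i < n) w i k); split.
    by apply: wpos => i; case: (Hw i).
  move=> x Hx; have [a Ha] := choice_fun Hx.
  have HS : forall i, exists S : seq G, uniq S /\ size S = m i /\
      forall k, in_pow S (w i k) (a k i).
    by move=> i; case: (Hw i) => _ /(_ (fun k => a k i)); apply => k; case: (Ha k).
  have [S HS'] := choice_fun HS.
  pose U := undup (flatten [seq S i | i <- enum 'I_n]).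
  have sU : size U <= N.
    apply: leq_trans (size_undup _) _.
    rewrite size_flatten sumnE /shape big_map big_map big_enum /=.
    by apply: leq_sum => i _; case: (HS' i) => _ [-> _].
  have [V [uV [sV subV]]] := @pad G U T M (undup_uniq _) (mx _ (undup_uniq _) sU) uT sT.
  exists V; split => //; split => // k.
  case: (Ha k) => _ ->; apply: in_pow_big => i.
  case: (HS' i) => _ [_ /(_ k) Hk].
  apply: in_pow_sub Hk => y yS; apply: subV; rewrite mem_undup.
  by apply/flatten_mapP; exists i => //; rewrite mem_enum.
Qed.
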